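(* Let $S$ be a Gröbner–Shirshov basis in $K\langle X;\Omega\rangle$ (with respect to a fixed monomial ordering $>$ on $\mathfrak{S}(X)$). Let $u_1,u_2\in\mathfrak{S}^\star(X)$ and $s_1,s_2\in S$ be such that $w=u_1|_{\overline{s_1}}=u_2|_{\overline{s_2}}$. Then $$u_1|_{s_1}\equiv u_2|_{s_2}\ \ \mathrm{mod}\,(S,w).$$
   Context: General setup. $K$ is a commutative ring with unit, $X$ a set, and $\Omega=\bigcup_{n\ge1}\Omega_n$ a set of operation symbols, $\Omega_n$ being the $n$-ary ones. For a set $A$ let $\Omega(A)=\{\delta(u_1,\dots,u_t)\mid t\ge1,\ \delta\in\Omega_t,\ u_i\in A\}$ (formal expressions). For a set $Y$, $S(Y)$ denotes the free semigroup (nonempty words) and $Y^*$ the free monoid on $Y$. Put $\mathfrak{S}_0=S(X)$ and $\mathfrak{S}_n=S(X\cup\Omega(\mathfrak{S}_{n-1}))$ for $n\ge1$; then $\mathfrak{S}_0\subset\mathfrak{S}_1\subset\cdots$ and $\mathfrak{S}(X)=\bigcup_{n\ge0}\mathfrak{S}_n$ (the $\Omega$-words). $K\langle X;\Omega\rangle$ is the free $K$-module with basis $\mathfrak{S}(X)$, with associative multiplication given by concatenation and each $\delta\in\Omega_n$ extended $K$-multilinearly; it is the free associative algebra with multiple linear operators $\Omega$ on $X$; its elements are $\Omega$-polynomials. The prime $\Omega$-words are the elements of $X\cup\Omega(\mathfrak{S}(X))$; each $u\in\mathfrak{S}(X)$ is uniquely a product $u_1\cdots u_n$ of prime $\Omega$-words,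 and $bre(u)=n$. For a symbol $\star\notin X$, $\mathfrak{S}^\star(X)$ is the set of elements of $\mathfrak{S}(X\cup\{\star\})$ containing exactly one occurrence of $\star$; for $u\in\mathfrak{S}^\star(X)$ and an $\Omega$-polynomial $s$, $u|_s$ denotes the result of replacing $\star$ by $s$ (extended linearly in $s$). A monomial ordering is a well ordering $>$ on $\mathfrak{S}(X)$ such that $w>v$ implies $u|_w>u|_v$ for all $u\in\mathfrak{S}^\star(X)$. For nonzero $f$, $\bar f$ is its largest $\Omega$-word; $f$ is monic if the coefficient of $\bar f$ is $1$. The ideal $Id(S)$ generated by a set $S$ is the $K$-span of all $u|_s$ with $u\in\mathfrak{S}^\star(X)$, $s\in S$, and $K\langle X;\Omega|S\rangle=K\langle X;\Omega\rangle/Id(S)$. For monic $f,g$: (I) if $w=\bar f a=b\bar g$ for some $a,b\in\mathfrak{S}(X)$ with $bre(w)<bre(\bar f)+bre(\bar g)$, then $(f,g)_w=fa-bg$ is an intersection composition; (II) if $w=\bar f=u|_{\bar g}$ for some $u\in\mathfrak{S}^\star(X)$, then $(f,g)_w=f-u|_g$ is an including composition. For a set $S$ of monic $\Omega$-polynomials, an $\Omega$-word $w$, and $\Omega$-polynomials $p,q$, we write $p\equiv q\ \mathrm{mod}(S,w)$ if $p-q=\sum_i\alpha_iu_i|_{s_i}$ with $\alpha_i\in K$, $u_i\in\mathfrak{S}^\star(X)$, $s_i\in S$ and $u_i|_{\overline{s_i}}<w$ for all $i$. $S$ is a Gröbner–Shirshov basis if every composition $(f,g)_w$ with $f,g\in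 S$ satisfies $(f,g)_w\equiv0\ \mathrm{mod}(S,w)$. *)

(* Defs.v *)
From HB Require Import structures.
From mathcomp Require Import all_boot all_order all_algebra.
Set Implicit Arguments. Unset Strict Implicit. Unset Printing Implicit Defensive.
Import GRing.Theory.

(* A prime word is a letter or delta(u_1,...,u_t) with u_i Omega-words;     *)
(* an Omega-word is a (nonempty, see wf_word) sequence of prime words.       *)
Inductive oprim (O A : Type) : Type :=
  | PX of A
  | PO of O & seq (seq (oprim O A)).
Arguments PX {O A} a.
Arguments PO {O A} d args.

Notation oword O A := (seq (oprim O A)).

Definition allP (T : Type) (Q : T -> Prop) (s : seq T) : Prop :=
  foldr (fun x acc => Q x /\ acc) True s.

Section PrimInd.
Variables (O A : Type) (P : oprim O A -> Prop).
Hypothesis HX : forall a, P (PX a).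
Hypothesis HO : forall d args, allP (allP P) args -> P (PO d args).
Fixpoint oprim_ind' (p : oprim O A) : P p :=
  match p return P p with
  | PX a => HX a
  | PO d args => HO d
      ((fix F (s : seq (seq (oprim O A))) : allP (allP P) s :=
          match s return allP (allP P) s with
          | [::] => I
          | w :: s' => conj
              ((fix G (v : seq (oprim O A)) : allP P v :=
                  match v return allP P v with
                  | [::] => I
                  | q :: v' => conj (oprim_ind' q) (G v')
                  end) w)
              (F s')
          end) args)
  end.
End PrimInd.

Fixpoint seqb (T : Type) (e : T -> T -> bool) (s t : seq T) : bool :=
  match s, t with
  | [::], [::] => true
  | x :: s', y :: t' => e x y && seqb e s' t'
  | _, _ => false
  end.

Lemma seqb_iff (T : Type) (e : T -> T -> bool) (s : seq T) :
  allP (fun x => forall y, e x y <-> x = y) s ->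
  forall t, seqb e s t <-> s = t.
Proof.
elim: s => [|x s IH] /= H [|y t] /=; try by split.
case: H => Hx Hs; split.
  by case/andP => /Hx -> /(IH Hs t) ->.
by case=> /Hx -> /(IH Hs t) ->.
Qed.

Section PrimEq.
Variables (O A : eqType).
Fixpoint oprim_eqb (p q : oprim O A) {struct p} : bool :=
  match p, q with
  | PX a, PX b => a == b
  | PO d s, PO e t => (d == e) && seqb (seqb oprim_eqb) s t
  | _, _ => false
  end.

Lemma oprim_eqb_iff (p q : oprim O A) : oprim_eqb p q <-> p = q.
Proof.
elim/oprim_ind': p q => [a|d s IH] [b|e t] /=; try by split.
  by split=> [/eqP ->|[->]].
have H : allP (fun x => forall y, seqb oprim_eqb x y <-> x = y) s.
  elim: s IH {t} => [|w s IHs] //= [Hw Hs]; split; last exact: IHs.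
  exact: seqb_iff.
split; first by case/andP => /eqP -> /(seqb_iff H) ->.
by case=> -> <-; rewrite eqxx /=; apply/(seqb_iff H).
Qed.

Lemma oprim_eqP : Equality.axiom oprim_eqb.
Proof. by move=> p q; apply: (iffP idP) => /oprim_eqb_iff. Qed.

HB.instance Definition _ := hasDecEq.Build (oprim O A) oprim_eqP.
End PrimEq.

(* Well-formedness: arities (ar d = n means d is in Omega_n) and           *)
(* nonemptiness of words.  The Omega-words S(X) are the wf_word's.          *)
Section Words.
Variables (O : eqType) (ar : O -> nat).

Fixpoint wf_prim (A : Type) (p : oprim O A) : bool :=
  match p with
  | PX _ => true
  | PO d args =>
      (size args == ar d) && all (fun w => (~~ nilp w) && all (@wf_prim A) w) args
  end.

Definition wf_word (A : Type) (w : oword O A) : bool :=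
  (~~ nilp w) && all (@wf_prim A) w.

Variable X : eqType.

(* number of occurrences of the star (encoded as the letter None) *)
Fixpoint pstars (p : oprim O (option X)) : nat :=
  match p with
  | PX None => 1
  | PX (Some _) => 0
  | PO _ args => sumn (map (fun w => sumn (map pstars w)) args)
  end.

(* u is an element of S^star(X): an Omega-word on X + {star} with exactly
   one occurrence of star *)
Definition is_star_word (u : oword O (option X)) : bool :=
  wf_word u && (sumn (map pstars u) == 1%N).

(* u|_s : replace star by the Omega-word s *)
Fixpoint psubst (p : oprim O (option X)) (s : oword O X) : oword O X :=
  match p with
  | PX (Some x) => [:: PX x]
  | PX None => s
  | PO d args => [:: PO d (map (fun w => flatten (map (fun q => psubst q s) w)) args)]
  end.

Definition wsubst (u : oword O (option X)) (s : oword O X) : oword O X :=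
  flatten (map (fun q => psubst q s) u).

(* A monomial ordering: lt v w means w > v; a well ordering on S(X)
   compatible with all contexts u in S^star(X). *)
Definition monomial_order (lt : oword O X -> oword O X -> Prop) : Prop :=
  [/\ (forall w, wf_word w -> ~ lt w w),
      (forall u v w, wf_word u -> wf_word v -> wf_word w ->
          lt u v -> lt v w -> lt u w),
      (forall v w, wf_word v -> wf_word w -> [\/ v = w, lt v w | lt w v]),
      (forall P : oword O X -> Prop, (exists w, wf_word w /\ P w) ->
          exists m, [/\ wf_word m, P m &
                        forall w, wf_word w -> P w -> ~ lt w m])
    & (forall u v w, is_star_word u -> wf_word v -> wf_word w ->
          lt v w -> lt (wsubst u v) (wsubst u w))].

(* Omega-polynomials: formal K-linear combinations of Omega-words, given    *)
(* by a representing list of (coefficient, word) pairs; two representatives *)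
(* denote the same element iff they have the same coefficients (peq).      *)
Variable K : comPzRingType.

Definition opoly := seq (K * oword O X).

Local Open Scope ring_scope.

Definition ocoef (f : opoly) (w : oword O X) : K := \sum_(c <- f | c.2 == w) c.1.

Definition wf_poly (f : opoly) : bool := all (fun c => wf_word c.2) f.

Definition peq (f g : opoly) : Prop := forall w, ocoef f w = ocoef g w.

Definition psub (f g : opoly) : opoly := f ++ [seq (- c.1, c.2) | c <- g].
Definition pscale (a : K) (f : opoly) : opoly := [seq (a * c.1, c.2) | c <- f].
(* u|_f, extended linearly in f *)
Definition plsubst (u : oword O (option X)) (f : opoly) : opoly :=
  [seq (c.1, wsubst u c.2) | c <- f].
Definition pmulr (f : opoly) (a : oword O X) : opoly := [seq (c.1, c.2 ++ a) | c <- f].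
Definition pmull (b : oword O X) (f : opoly) : opoly := [seq (c.1, b ++ c.2) | c <- f].

Variable lt : oword O X -> oword O X -> Prop.

(* w is the leading Omega-word \bar f of f (f nonzero) *)
Definition is_lead (f : opoly) (w : oword O X) : Prop :=
  ocoef f w != 0 /\ forall v, ocoef f v != 0 -> v = w \/ lt v w.

Definition omonic (f : opoly) : Prop :=
  exists w, is_lead f w /\ ocoef f w = 1.

Definition cong_mod (S : opoly -> Prop) (w : oword O X) (p q : opoly) : Prop :=
  exists l : seq (K * oword O (option X) * opoly),
    (forall t, t \in l ->
       [/\ is_star_word t.1.2, S t.2 &
           exists ws, is_lead t.2 ws /\ lt (wsubst t.1.2 ws) w])
    /\ peq (psub p q) (flatten [seq pscale t.1.1 (plsubst t.1.2 t.2) | t <- l]).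

Definition intersection_comp (f g : opoly) (w : oword O X) (h : opoly) : Prop :=
  exists a b wf wg,
    [/\ is_lead f wf, is_lead g wg, wf_word a & wf_word b] /\
    [/\ w = wf ++ a, w = b ++ wg,
        (size w < size wf + size wg)%N & h = psub (pmulr f a) (pmull b g)].

Definition including_comp (f g : opoly) (w : oword O X) (h : opoly) : Prop :=
  exists u wf wg,
    [/\ is_lead f wf, is_lead g wg & is_star_word u] /\
    [/\ w = wf, w = wsubst u wg & h = psub f (plsubst u g)].

Definition GSbasis (S : opoly -> Prop) : Prop :=
  forall f g w h, S f -> S g ->
    intersection_comp f g w h \/ including_comp f g w h ->
    cong_mod S w h [::].

End Words.

(* Main.v *)
Require Import Defs.
From HB Require Import structures.
From mathcomp Require Import all_boot all_order all_algebra.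
Set Implicit Arguments. Unset Strict Implicit. Unset Printing Implicit Defensive.
Import GRing.Theory.

Section Lift.
Variables (O X : eqType) (ar : O -> nat).

Fixpoint liftp (p : oprim O X) : oprim O (option X) :=
  match p with
  | PX x => PX (Some x)
  | PO d args => PO d (map (map liftp) args)
  end.

Lemma allP_map T (P Q : T -> Prop) s : (forall x, P x -> Q x) -> Defs.allP P s -> Defs.allP Q s.
Proof. by move=> H; elim: s => //= x s IH [/H Hx /IH]. Qed.

Lemma psubst_lift p s : psubst (liftp p) s = [:: p].
Proof.
elim/oprim_ind': p => [a|d args IH] //=.
congr [:: PO d _]; elim: args IH => //= w args IHa [Hw /IHa ->]; congr (_ :: _).
by elim: w Hw => //= q w IHw [-> /IHw ->].
Qed.

Lemma wsubst_lift l s : wsubst (map liftp l) s = l.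
Proof. by elim: l => //= p l IH; rewrite /wsubst /= psubst_lift /= -/(wsubst _ _) IH. Qed.

Lemma wsubst_cat (u v : oword O (option X)) (s : oword O X) : wsubst (u ++ v) s = wsubst u s ++ wsubst v s.
Proof. by rewrite /wsubst map_cat flatten_cat. Qed.

Lemma pstars_lift p : pstars (liftp p) = 0%N.
Proof.
elim/oprim_ind': p => [a|d args IH] //=.
elim: args IH => //= w args IHa [Hw /IHa ->]; rewrite addn0.
by elim: w Hw => //= q w IHw [-> /IHw ->].
Qed.

Lemma stars_lift (l : oword O X) : sumn (map (@pstars O X) (map liftp l)) = 0%N.
Proof. by elim: l => //= p l ->; rewrite pstars_lift. Qed.
Lemma stars_lift' (l : oword O X) : sumn [seq pstars i | i <- map liftp l] = 0%N.
Proof. exact: stars_lift. Qed.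

Lemma wf_lift p : wf_prim ar (liftp p) = wf_prim ar p.
Proof.
elim/oprim_ind': p => [a|d args IH] //=.
rewrite size_map; congr (_ && _).
elim: args IH => //= w args IHa [Hw /IHa ->]; congr (_ && _).
rewrite /nilp size_map; congr (_ && _).
by elim: w Hw => //= q w IHw [-> /IHw ->].
Qed.

Lemma all_wf_lift (l : oword O X) : all (@wf_prim O ar _) (map liftp l) = all (@wf_prim O ar _) l.
Proof. by elim: l => //= p l ->; rewrite wf_lift. Qed.


Inductive ctx :=
  | CTop of oword O X & oword O X
  | CDeep of oword O X & oword O X & O & seq (oword O X) & ctx & seq (oword O X).

Fixpoint fill (k : ctx) (x : oword O X) : oword O X :=
  match k with
  | CTop l r => l ++ x ++ r
  | CDeep l r d la k' ra => l ++ [:: PO d (la ++ fill k' x :: ra)] ++ r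
  end.

Definition core k x :=
  match k with
  | CTop _ _ => x
  | CDeep _ _ d la k' ra => [:: PO d (la ++ fill k' x :: ra)]
  end.
Definition cl k := match k with CTop l _ => l | CDeep l _ _ _ _ _ => l end.
Definition cr k := match k with CTop _ r => r | CDeep _ r _ _ _ _ => r end.
Definition setLR k l r :=
  match k with
  | CTop _ _ => CTop l r
  | CDeep _ _ d la k' ra => CDeep l r d la k' ra
  end.

Lemma fill_core k x : fill k x = cl k ++ core k x ++ cr k.
Proof. by case: k. Qed.
Lemma fill_setLR k l r x : fill (setLR k l r) x = l ++ core k x ++ r.
Proof. by case: k. Qed.
Lemma core_setLR k l r x : core (setLR k l r) x = core k x.
Proof. by case: k. Qed.
Lemma setLR_id k : setLR k (cl k) (cr k) = k.
Proof. by case: k. Qed.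
Lemma cl_setLR k l r : cl (setLR k l r) = l. Proof. by case: k. Qed.
Lemma cr_setLR k l r : cr (setLR k l r) = r. Proof. by case: k. Qed.

Fixpoint toStar (k : ctx) : oword O (option X) :=
  match k with
  | CTop l r => map liftp l ++ [:: PX None] ++ map liftp r
  | CDeep l r d la k' ra =>
      map liftp l ++ [:: PO d (map (map liftp) la ++ toStar k' :: map (map liftp) ra)]
        ++ map liftp r
  end.

Lemma wsubst_cons (q : oprim O (option X)) u x : wsubst (q :: u) x = psubst q x ++ wsubst u x.
Proof. by []. Qed.

Lemma wsubst_toStar k x : wsubst (toStar k) x = fill k x.
Proof.
elim: k => [l r|l r d la k IH ra] /=; rewrite wsubst_cat wsubst_lift wsubst_cons wsubst_lift //.
rewrite /=; congr (_ ++ PO d _ :: _).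
rewrite map_cat /= -/(wsubst _ _) IH -map_comp; congr (_ ++ _ :: _).
  by elim: la => //= w la ->; rewrite -/(wsubst _ _) wsubst_lift.
by elim: ra => //= w ra ->; rewrite -/(wsubst _ _) wsubst_lift.
Qed.

Fixpoint ccomp (k k' : ctx) : ctx :=
  match k with
  | CTop l r => setLR k' (l ++ cl k') (cr k' ++ r)
  | CDeep l r d la k0 ra => CDeep l r d la (ccomp k0 k') ra
  end.

Lemma fill_ccomp k k' x : fill (ccomp k k') x = fill k (fill k' x).
Proof.
elim: k => [l r|l r d la k IH ra] /=; last by rewrite IH.
by rewrite fill_setLR fill_core !catA.
Qed.

Fixpoint wf_ctx (k : ctx) : bool :=
  match k with
  | CTop l r => all (@wf_prim O ar _) l && all (@wf_prim O ar _) r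
  | CDeep l r d la k' ra =>
      [&& all (@wf_prim O ar _) l, all (@wf_prim O ar _) r,
          (size la + size ra).+1 == ar d, all (@wf_word O ar _) la,
          all (@wf_word O ar _) ra & wf_ctx k']
  end.

Lemma wf_cl k : wf_ctx k -> all (@wf_prim O ar _) (cl k).
Proof. by case: k => [l r /andP[]|l r d la k ra /and5P[]]. Qed.
Lemma wf_cr k : wf_ctx k -> all (@wf_prim O ar _) (cr k).
Proof. by case: k => [l r /andP[]|l r d la k ra /and5P[]]. Qed.
Lemma wf_setLR k l r : wf_ctx k -> all (@wf_prim O ar _) l -> all (@wf_prim O ar _) r ->
  wf_ctx (setLR k l r).
Proof. case: k => [l0 r0|l0 r0 d la k ra] /=; first by move=> _ -> ->. by move=> /and5P[_ _ -> -> /andP[-> ->]] -> ->. Qed.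

Lemma wf_fill_core k x : wf_ctx k -> wf_word ar x ->
  wf_word ar (core k x) /\ wf_word ar (fill k x).
Proof.
elim: k x => [l r|l r d la k IH ra] x /=.
  move=> /andP[Hl Hr] Hx; split=> //; move: Hx; rewrite /wf_word /nilp !all_cat Hl Hr /=.
  by rewrite !size_cat; case/andP=> Hn ->; rewrite andbT; case: (size x) Hn => //= n; rewrite addnS.
move=> /and5P[Hl Hr Hs Hla /andP[Hra Hk]] Hx; have [_ Hf] := IH x Hk Hx.
have Hc : wf_word ar [:: PO d (la ++ fill k x :: ra)].
  rewrite /wf_word /= andbT size_cat /= addnS -(eqP Hs) eqxx /= all_cat /= Hla Hra.
  by move: Hf; rewrite /wf_word => ->.
split=> //; rewrite /wf_word /nilp size_cat /= addnS /= all_cat Hl /= Hr andbT.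
by move: Hc; rewrite /wf_word /= andbT.
Qed.

Lemma wf_ccomp k k' : wf_ctx k -> wf_ctx k' -> wf_ctx (ccomp k k').
Proof.
elim: k => [l r|l r d la k IH ra] /=.
  by move=> /andP[Hl Hr] Hk'; apply: wf_setLR => //; rewrite all_cat ?Hl ?Hr ?wf_cl ?wf_cr.
by move=> /and5P[-> -> -> -> /andP[-> Hk]] Hk' /=; apply: IH.
Qed.

Lemma star_toStar k : wf_ctx k -> is_star_word ar (toStar k).
Proof.
rewrite /is_star_word.
elim: k => [l r|l r d la k IH ra] /=.
  move=> /andP[Hl Hr]; rewrite /wf_word /nilp !map_cat !sumn_cat !stars_lift' size_cat /= addnS /=.
  by rewrite !all_cat /= !all_wf_lift Hl Hr stars_lift'.
move=> /and5P[Hl Hr Hs Hla /andP[Hra Hk]]; have /andP[Hwk /eqP Hsk] := IH Hk.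
rewrite /wf_word /nilp !map_cat !sumn_cat !stars_lift' size_cat /= addnS /=.
rewrite !all_cat /= !all_wf_lift Hl Hr /= andbT size_cat /= !size_map addnS -(eqP Hs) eqxx /=.
rewrite !map_cat !sumn_cat /= Hsk.
have E : forall s : seq (oword O X), sumn [seq sumn [seq pstars i | i <- w] | w <- map (map liftp) s] = 0%N.
  by move=> s; elim: s => //= w s ->; rewrite stars_lift'.
have W : forall s : seq (oword O X), all (@wf_word O ar _) s ->
  all (fun w => ~~ nilp w && all (@wf_prim O ar _) w) (map (map liftp) s).
  by move=> s; elim: s => //= w s IHs /andP[Hw /IHs ->]; rewrite andbT /nilp size_map all_wf_lift.
rewrite E E stars_lift' all_cat /= W // W // !addn0 !add0n eqxx !andbT.
by move: Hwk; rewrite /wf_word.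
Qed.


Definition starcore k : oword O (option X) :=
  match k with
  | CTop _ _ => [:: PX None]
  | CDeep _ _ d la k' ra => [:: PO d (map (map liftp) la ++ toStar k' :: map (map liftp) ra)]
  end.

Lemma toStar_core k : toStar k = map liftp (cl k) ++ starcore k ++ map liftp (cr k).
Proof. by case: k. Qed.
Lemma toStar_setLR k l r : toStar (setLR k l r) = map liftp l ++ starcore k ++ map liftp r.
Proof. by case: k. Qed.
Lemma starcore_setLR k l r : starcore (setLR k l r) = starcore k.
Proof. by case: k. Qed.

Definition Pp (q : oprim O (option X)) : Prop :=
  wf_prim ar q ->
  (pstars q = 0%N -> exists p, q = liftp p) /\
  (pstars q = 1%N -> exists k, wf_ctx k /\ [:: q] = toStar k).

Lemma word_dec (w : oword O (option X)) : Defs.allP Pp w -> all (@wf_prim O ar _) w ->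
  (sumn [seq pstars i | i <- w] = 0%N -> exists v, w = map liftp v) /\
  (sumn [seq pstars i | i <- w] = 1%N -> exists k, wf_ctx k /\ w = toStar k).
Proof.
elim: w => [|q w IH] /=.
  by move=> _ _; split=> // _; exists [::].
move=> [Hq Hw] /andP[wq ww]; have [IH0 IH1] := IH Hw ww; have [Hq0 Hq1] := Hq wq.
split.
  move=> /eqP; rewrite addn_eq0 => /andP[/eqP /Hq0 [p ->] /eqP /IH0 [v ->]].
  by exists (p :: v).
case: (pstars q) Hq0 Hq1 => [|[|n]] Hq0 Hq1 /=.
- rewrite add0n => /IH1 [k [wk ->]]; have [p Ep] := Hq0 erefl.
  exists (setLR k (p :: cl k) (cr k)); split.
    apply: wf_setLR => //; last exact: wf_cr.
    by rewrite /= wf_cl // andbT -wf_lift -Ep.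
  by rewrite toStar_setLR toStar_core Ep.
- move=> /eqP; rewrite add1n eqSS => /eqP /IH0 [v Ev]; rewrite Ev.
  have [k [wk Ek]] := Hq1 erefl.
  have : size (toStar k) = 1%N by rewrite -Ek.
  rewrite toStar_core !size_cat !size_map.
  have -> : size (starcore k) = 1%N by case: k {Ek wk}.
  rewrite add1n addnS => /eqP; rewrite eqSS addn_eq0 !size_eq0 => /andP[/eqP El /eqP Er].
  exists (setLR k [::] v); split.
    by apply: wf_setLR => //; rewrite -all_wf_lift -Ev.
  rewrite toStar_setLR /=.
  by move: Ek; rewrite toStar_core El Er /= cats0 => <-.
- by rewrite !addSn => /eqP.
Qed.

Lemma args_dec (args : seq (oword O (option X))) : Defs.allP (Defs.allP Pp) args ->
  all (fun w => ~~ nilp w && all (@wf_prim O ar _) w) args ->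
  (sumn [seq sumn [seq pstars i | i <- w] | w <- args] = 0%N ->
     exists a, args = map (map liftp) a) /\
  (sumn [seq sumn [seq pstars i | i <- w] | w <- args] = 1%N ->
     exists la k ra, [/\ args = map (map liftp) la ++ toStar k :: map (map liftp) ra,
        wf_ctx k, all (@wf_word O ar _) la & all (@wf_word O ar _) ra]).
Proof.
have WL : forall a : seq (oword O X),
  all (fun w => ~~ nilp w && all (@wf_prim O ar _) w) (map (map liftp) a) ->
  all (@wf_word O ar _) a.
  by elim=> //= v a IHa /andP[Hv /IHa ->]; rewrite andbT /wf_word; move: Hv; rewrite /nilp size_map all_wf_lift.
elim: args => [|w args IH] /=.
  by move=> _ _; split=> // _; exists [::].
move=> [Hw Ha] /andP[/andP[nw ww] wa]; have [IH0 IH1] := IH Ha wa.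
have [Hw0 Hw1] := word_dec Hw ww.
split.
  move=> /eqP; rewrite addn_eq0 => /andP[/eqP /Hw0 [v ->] /eqP /IH0 [a ->]].
  by exists (v :: a).
case: (sumn _) Hw0 Hw1 => [|[|n]] Hw0 Hw1 /=.
- rewrite add0n => /IH1 [la [k [ra [-> wk wla wra]]]]; have [v Ev] := Hw0 erefl.
  exists (v :: la), k, ra; split => //=; rewrite ?Ev // wla andbT.
  by move: nw ww; rewrite Ev /wf_word /nilp size_map all_wf_lift => -> ->.
- move=> /eqP; rewrite add1n eqSS => /eqP /IH0 [a Ea].
  have [k [wk Ek]] := Hw1 erefl.
  exists [::], k, a; split => //=; first by rewrite Ek Ea.
  by apply: WL; rewrite -Ea.
- by [].
Qed.

Lemma prim_dec q : Pp q.
Proof.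
elim/oprim_ind': q => [[x|]|d args IH] /=.
- by move=> _; split=> // _; exists (PX x).
- by move=> _; split=> // _; exists (CTop [::] [::]).
move=> /andP[Hs Ha]; have [H0 H1] := args_dec IH Ha.
split.
  by move=> /H0 [a ->]; exists (PO d a).
move=> /H1 [la [k [ra [E wk wla wra]]]].
exists (CDeep [::] [::] d la k ra); split; last by rewrite /= E.
rewrite /= wla wra wk !andbT; move: Hs; rewrite E size_cat /= !size_map addnS.
by [].
Qed.

Lemma allP_all T (P : T -> Prop) s : (forall x, P x) -> Defs.allP P s.
Proof. by move=> H; elim: s. Qed.

Lemma star2ctx u : is_star_word ar u -> exists k, wf_ctx k /\ u = toStar k.
Proof.
case/andP=> /andP[_ wu] /eqP Hs.
have [_ H1] := word_dec (allP_all _ prim_dec) wu.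
exact: H1.
Qed.

End Lift.


Section Poly.
Local Open Scope ring_scope.
Variables (O X : eqType) (K : comPzRingType).
Notation word := (oword O X).
Notation poly := (opoly O X K).

Definition Ef (f : poly) (g : word -> K) : K := \sum_(c <- f) c.1 * g c.2.

Lemma ocoefE (f : poly) z : ocoef f z = Ef f (fun y => (y == z)%:R).
Proof.
rewrite /ocoef /Ef big_mkcond; apply: eq_bigr => c _.
by case: eqP => _; rewrite ?mulr1 ?mulr0.
Qed.

Lemma Ef_cat f h g : Ef (f ++ h) g = Ef f g + Ef h g.
Proof. by rewrite /Ef big_cat. Qed.
Lemma Ef_nil g : Ef [::] g = 0.
Proof. by rewrite /Ef big_nil. Qed.
Lemma Ef_psub f h g : Ef (psub f h) g = Ef f g - Ef h g.
Proof.
rewrite /psub Ef_cat /Ef big_map -sumrN; congr (_ + _).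
by apply: eq_bigr => c _; rewrite mulNr.
Qed.
Lemma Ef_pscale a f g : Ef (pscale a f) g = a * Ef f g.
Proof. by rewrite /Ef big_map mulr_sumr; apply: eq_bigr => c _; rewrite mulrA. Qed.
Lemma Ef_plsubst u f g : Ef (plsubst u f) g = Ef f (fun y => g (wsubst u y)).
Proof. by rewrite /Ef big_map. Qed.
Lemma Ef_pmulr f a g : Ef (pmulr f a) g = Ef f (fun y => g (y ++ a)).
Proof. by rewrite /Ef big_map. Qed.
Lemma Ef_pmull b f g : Ef (pmull b f) g = Ef f (fun y => g (b ++ y)).
Proof. by rewrite /Ef big_map. Qed.
Lemma Ef_flatten T (F : T -> poly) l g :
  Ef (flatten (map F l)) g = \sum_(t <- l) Ef (F t) g.
Proof. by rewrite /Ef big_flatten /= big_map. Qed.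
Lemma Ef_ext f g1 g2 : (forall y, g1 y = g2 y) -> Ef f g1 = Ef f g2.
Proof. by move=> H; apply: eq_bigr => c _; rewrite H. Qed.

Lemma sum_pred1_uniq (D : seq word) c (F : word -> K) :
  uniq D -> c \in D -> \sum_(y <- D | c == y) F y = F c.
Proof.
move=> uD cD; rewrite (big_rem _ cD) eqxx big1_seq; first exact: addr0.
by move=> y /andP[/eqP <-]; rewrite mem_rem_uniqF.
Qed.

Lemma regroup (f : poly) g (D : seq word) : uniq D -> {subset map snd f <= D} ->
  Ef f g = \sum_(y <- D) ocoef f y * g y.
Proof.
move=> uD sD; rewrite /ocoef.
under [RHS]eq_bigr do rewrite mulr_suml.
rewrite (exchange_big_dep xpredT) //= /Ef; apply: eq_big_seq => c cf.
rewrite (eq_bigr (fun _ => c.1 * g c.2)); last by move=> y /eqP ->.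
by rewrite sum_pred1_uniq //; apply: sD; apply: map_f.
Qed.


Lemma in_snd (f : poly) y : ocoef f y != 0 -> y \in map snd f.
Proof.
apply: contraR => Hy; rewrite /ocoef big1_seq // => c /andP[/eqP Ec cf].
by case/negP: Hy; rewrite -Ec; apply: map_f.
Qed.

Lemma peq_Ef (f h : poly) : peq f h -> forall g, Ef f g = Ef h g.
Proof.
move=> E g; set D := undup (map snd (f ++ h)).
have uD : uniq D by apply: undup_uniq.
rewrite (regroup g uD) ?(regroup (f:=h) g uD).
  by apply: eq_bigr => y _; rewrite E.
all: by move=> y yf; rewrite mem_undup map_cat mem_cat yf ?orbT.
Qed.

Lemma Ef_peq (f h : poly) : (forall g, Ef f g = Ef h g) -> peq f h.
Proof. by move=> E w; rewrite !ocoefE E. Qed.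

Definition Dn (f : poly) ws := [seq y <- undup (map snd f) | (y != ws) && (ocoef f y != 0)].

Lemma Dn_in f ws y : y \in Dn f ws -> [/\ y \in map snd f, y != ws & ocoef f y != 0].
Proof. by rewrite mem_filter mem_undup => /andP[/andP[-> ->] ->]. Qed.

Lemma expand (f : poly) ws g : ocoef f ws != 0 -> ocoef f ws = 1 ->
  Ef f g = g ws + \sum_(x <- Dn f ws) ocoef f x * g x.
Proof.
move=> H0 H1; have uD : uniq (undup (map snd f)) by apply: undup_uniq.
rewrite (regroup g uD) //; last by move=> y; rewrite mem_undup.
have wsD : ws \in undup (map snd f) by rewrite mem_undup in_snd.
rewrite (bigID (fun y => y == ws)) /=; congr (_ + _).
  rewrite (eq_bigl (fun y => ws == y)); last by move=> y; rewrite eq_sym.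
  by rewrite sum_pred1_uniq // H1 mul1r.
rewrite (bigID (fun y => ocoef f y != 0)) /= [X in _ + X]big1; last first.
  by move=> y /andP[_]; rewrite negbK => /eqP ->; rewrite mul0r.
by rewrite addr0 /Dn big_filter.
Qed.

End Poly.


Section Main.
Local Open Scope ring_scope.
Variables (K : comPzRingType) (X O : eqType) (ar : O -> nat).
Variable (lt : oword O X -> oword O X -> Prop).
Hypothesis Hlt : monomial_order ar lt.
Variable (S : opoly O X K -> Prop).
Hypothesis HSwf : forall s, S s -> wf_poly ar s.
Hypothesis HSmon : forall s, S s -> omonic lt s.
Hypothesis HGSB : GSbasis ar lt S.

Notation word := (oword O X).
Notation poly := (opoly O X K).
Notation cong := (cong_mod ar lt S).

Lemma lt_irr w : wf_word ar w -> ~ lt w w.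
Proof. by have [H _ _ _ _] := Hlt; apply: H. Qed.
Lemma lt_trans u v w : wf_word ar u -> wf_word ar v -> wf_word ar w -> lt u v -> lt v w -> lt u w.
Proof. by have [_ H _ _ _] := Hlt; apply: H. Qed.
Lemma lt_mon u v w : is_star_word ar u -> wf_word ar v -> wf_word ar w ->
  lt v w -> lt (wsubst u v) (wsubst u w).
Proof. by have [_ _ _ _ H] := Hlt; apply: H. Qed.

Lemma word_wf s y : S s -> y \in map snd s -> wf_word ar y.
Proof.
move=> Ss /mapP [c cs ->]; have := HSwf Ss; rewrite /wf_poly => /allP; exact.
Qed.

Lemma lead_wf s ws : S s -> is_lead lt s ws -> wf_word ar ws.
Proof. by move=> Ss [H0 _]; apply: (word_wf Ss); apply: in_snd. Qed.

Lemma lead_one s ws : S s -> is_lead lt s ws -> ocoef s ws = 1.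
Proof.
move=> Ss Hl; have [w' [Hl' H1]] := HSmon Ss.
suff -> : ws = w' by [].
have [H0 Hd] := Hl; have [H0' Hd'] := Hl'.
have wws := lead_wf Ss Hl; have ww' := lead_wf Ss Hl'.
case: (Hd _ H0') => [->//|lt1]; case: (Hd' _ H0) => [->//|lt2].
by case: (lt_irr wws); apply: (lt_trans wws ww' wws).
Qed.

Lemma lead_lt s ws y : S s -> is_lead lt s ws -> y \in Dn s ws -> lt y ws.
Proof.
move=> Ss [_ Hd] /Dn_in [_ /negbTE Hne Hy].
by case: (Hd _ Hy) => // E; rewrite E eqxx in Hne.
Qed.

Definition terms (l : seq (K * oword O (option X) * poly)) : poly :=
  flatten [seq pscale t.1.1 (plsubst t.1.2 t.2) | t <- l].

Lemma Ef_terms l g : Ef (terms l) g = \sum_(t <- l) t.1.1 * Ef t.2 (fun y => g (wsubst t.1.2 y)).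
Proof. by rewrite /terms Ef_flatten; apply: eq_bigr => t _; rewrite Ef_pscale Ef_plsubst. Qed.

Definition good w (t : K * oword O (option X) * poly) :=
  [/\ is_star_word ar t.1.2, S t.2 &
      exists ws, is_lead lt t.2 ws /\ lt (wsubst t.1.2 ws) w].

Lemma cong_intro w p q l : (forall t, t \in l -> good w t) ->
  (forall g, Ef p g - Ef q g = Ef (terms l) g) -> cong w p q.
Proof.
move=> Hg E; exists l; split; first exact: Hg.
by apply: Ef_peq => g; rewrite Ef_psub E.
Qed.

Lemma cong_elim w p q : cong w p q ->
  exists l, (forall t, t \in l -> good w t) /\ (forall g, Ef p g - Ef q g = Ef (terms l) g).
Proof.
case=> l [Hg E]; exists l; split; first exact: Hg.
by move=> g; rewrite -Ef_psub; apply: peq_Ef.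
Qed.

Lemma cong_sym w p q : cong w p q -> cong w q p.
Proof.
case/cong_elim => l [Hg E].
apply: (cong_intro (l := [seq (- t.1.1, t.1.2, t.2) | t <- l])).
  by move=> t /mapP [t0 t0l ->]; case: (Hg _ t0l).
move=> g; rewrite Ef_terms big_map -[LHS]opprB E Ef_terms -sumrN.
by apply: eq_bigr => t _; rewrite mulNr.
Qed.

Lemma comp_star (k : ctx O X) u : wf_ctx ar k -> is_star_word ar u ->
  exists u', is_star_word ar u' /\ forall x, wsubst u' x = fill k (wsubst u x).
Proof.
move=> wk /star2ctx [k' [wk' ->]]; exists (toStar (ccomp k k')); split.
  by apply: star_toStar; apply: wf_ccomp.
by move=> x; rewrite !wsubst_toStar fill_ccomp.
Qed.

Lemma wrap (k : ctx O X) w' p q p' q' : wf_ctx ar k -> wf_word ar w' -> cong w' p q ->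
  (forall g, Ef p' g - Ef q' g = Ef p (fun y => g (fill k y)) - Ef q (fun y => g (fill k y))) ->
  cong (fill k w') p' q'.
Proof.
move=> wk ww /cong_elim [l [Hg E]] E'.
suff [l' [Hg' E'']] : exists l', (forall t, t \in l' -> good (fill k w') t) /\
   forall g, Ef (terms l') g = Ef (terms l) (fun y => g (fill k y)).
  by apply: (cong_intro Hg') => g; rewrite E' E E''.
elim: l Hg {E} => [|t l IH] Hg.
  by exists [::]; split=> // g; rewrite /terms /= !Ef_nil.
have [l' [Hg' El']] := IH (fun t' H => Hg t' (@mem_behead _ (t :: l) t' H)).
have [st St [ws [Hws Hlt']]] := Hg t (mem_head _ _).
have [u' [su' Eu']] := comp_star wk st.
exists ((t.1.1, u', t.2) :: l'); split.
  move=> t'; rewrite inE => /orP [/eqP -> |]; last exact: Hg'.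
  split=> //; exists ws; split=> //=; rewrite Eu' -!wsubst_toStar.
  have [k' [wk' Et]] := star2ctx st.
  apply: lt_mon => //; first exact: star_toStar.
  by rewrite Et wsubst_toStar; case: (wf_fill_core wk' (lead_wf St Hws)).
move=> g; rewrite !Ef_terms !big_cons -!Ef_terms El' /=; congr (_ * _ + _).
by apply: Ef_ext => y; rewrite Eu'.
by rewrite Ef_terms.
Qed.


Lemma disjoint s1 s2 ws1 ws2 (L R : word -> oword O (option X)) :
  S s1 -> S s2 -> is_lead lt s1 ws1 -> is_lead lt s2 ws2 ->
  (forall x, wf_word ar x -> is_star_word ar (L x)) ->
  (forall y, wf_word ar y -> is_star_word ar (R y)) ->
  (forall x y, wsubst (L x) y = wsubst (R y) x) ->
  cong (wsubst (R ws2) ws1) (plsubst (R ws2) s1) (plsubst (L ws1) s2).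
Proof.
move=> S1 S2 H1 H2 HL HR C.
have w1 := lead_wf S1 H1; have w2 := lead_wf S2 H2.
have o1 := lead_one S1 H1; have o2 := lead_one S2 H2.
have [n1 _] := H1; have [n2 _] := H2.
apply: (cong_intro (l := [seq (ocoef s1 x, L x, s2) | x <- Dn s1 ws1] ++
                         [seq (- ocoef s2 y, R y, s1) | y <- Dn s2 ws2])).
  move=> t; rewrite mem_cat => /orP [] /mapP [x xD ->];
    have [xs _ _] := Dn_in xD.
    have wx := word_wf S1 xs.
    split=> //=; first exact: HL.
    exists ws2; split=> //; rewrite C; apply: lt_mon => //; first exact: HR.
    exact: lead_lt S1 H1 xD.
  have wx := word_wf S2 xs.
  split=> //=; first exact: HR.
  exists ws1; split=> //; rewrite -C -[wsubst (R ws2) ws1]C; apply: lt_mon => //; first exact: HL.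
  exact: lead_lt S2 H2 xD.
move=> g; rewrite !Ef_plsubst Ef_terms big_cat !big_map /=.
rewrite (Ef_ext s2 (fun y => congr1 g (C ws1 y))).
under eq_bigr => x _ do rewrite (Ef_ext s2 (fun y => congr1 g (C x y))).
set G := fun x y => g (wsubst (R y) x).
rewrite (expand _ n1 o1) (expand _ n2 o2).
under eq_bigr => x _ do rewrite (expand _ n2 o2) mulrDr mulr_sumr.
under [in X in _ = _ + X]eq_bigr => y _ do rewrite (expand _ n1 o1) mulrDr mulr_sumr.
rewrite !big_split /= [X in _ = _ + X + _]exchange_big /=.
under [X in _ = _ + (X + _)]eq_bigr => i _ do rewrite mulNr.
rewrite sumrN.
under [X in _ = _ + (_ + X)]eq_bigr => i _ do (under eq_bigr => j _ do rewrite mulNr mulrCA; rewrite sumrN).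
rewrite sumrN.
by rewrite opprD addrACA subrr add0r addrACA subrr addr0.
Qed.


Lemma wf_word_cat (a b : word) : wf_word ar a -> wf_word ar b -> wf_word ar (a ++ b).
Proof.
rewrite /wf_word /nilp size_cat all_cat => /andP[na ->] /andP[_ ->].
by case: (size a) na.
Qed.

Lemma inc (k kin : ctx O X) s1 s2 ws1 ws2 : wf_ctx ar k -> wf_ctx ar kin ->
  S s1 -> S s2 -> is_lead lt s1 ws1 -> is_lead lt s2 ws2 -> ws1 = fill kin ws2 ->
  cong (fill k ws1) (plsubst (toStar k) s1) (plsubst (toStar (ccomp k kin)) s2).
Proof.
move=> wk wkin S1 S2 H1 H2 E.
have H := HGSB S1 S2 (or_intror (ex_intro _ (toStar kin) (ex_intro _ ws1 (ex_intro _ ws2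
  (conj (And3 H1 H2 (star_toStar wkin)) (And3 erefl (esym (etrans (wsubst_toStar _ _) (esym E))) erefl)))))).
apply: (wrap wk (lead_wf S1 H1) H) => g.
rewrite !Ef_plsubst Ef_psub Ef_nil subr0 Ef_plsubst; congr (_ - _).
  by apply: Ef_ext => y; rewrite wsubst_toStar.
by apply: Ef_ext => y; rewrite !wsubst_toStar fill_ccomp.
Qed.

Lemma inter (A F' : word) s1 s2 ws1 ws2 a b :
  all (@wf_prim O ar _) A -> all (@wf_prim O ar _) F' ->
  S s1 -> S s2 -> is_lead lt s1 ws1 -> is_lead lt s2 ws2 -> wf_word ar a -> wf_word ar b ->
  ws1 ++ a = b ++ ws2 -> (size (ws1 ++ a) < size ws1 + size ws2)%N ->
  cong (A ++ (ws1 ++ a) ++ F') (plsubst (toStar (CTop A (a ++ F'))) s1)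
       (plsubst (toStar (CTop (A ++ b) F')) s2).
Proof.
move=> wA wF S1 S2 H1 H2 wa wb E Hs.
have H := HGSB S1 S2 (w := ws1 ++ a) (h := psub (pmulr s1 a) (pmull b s2))
  (or_introl (ex_intro _ a (ex_intro _ b (ex_intro _ ws1 (ex_intro _ ws2
  (conj (And4 H1 H2 wa wb) (And4 erefl E Hs erefl))))))).
have wk : wf_ctx ar (CTop A F') by rewrite /= wA wF.
apply: (wrap wk (wf_word_cat (lead_wf S1 H1) wa) H) => g.
rewrite Ef_nil subr0 (Ef_psub (pmulr s1 a)) !Ef_plsubst Ef_pmulr Ef_pmull; congr (_ - _).
  by apply: Ef_ext => y; rewrite wsubst_toStar /= -!catA.
by apply: Ef_ext => y; rewrite wsubst_toStar /= -!catA.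
Qed.


Lemma cat_split (T : eqType) (A B D E : seq T) : A ++ B = D ++ E -> (size A <= size D)%N ->
  exists m, D = A ++ m /\ B = m ++ E.
Proof.
elim: A D => [|x A IH] [|y D] //=; first by move=> ->; exists [::].
  by move=> ->; exists (y :: D).
by move=> [-> /IH H] /H [m [-> ->]]; exists m.
Qed.

Lemma wf_prefix (x y : word) : wf_word ar (x ++ y) -> ~~ nilp x -> wf_word ar x.
Proof. by rewrite /wf_word all_cat => /andP[_ /andP[-> _]] ->. Qed.
Lemma wf_suffix (x y : word) : wf_word ar (x ++ y) -> ~~ nilp y -> wf_word ar y.
Proof. by rewrite /wf_word all_cat => /andP[_ /andP[_ ->]] ->. Qed.

Lemma dis_top (k1 k2 : ctx O X) s1 s2 ws1 ws2 m :
  wf_ctx ar k1 -> wf_ctx ar k2 -> S s1 -> S s2 -> is_lead lt s1 ws1 -> is_lead lt s2 ws2 ->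
  cl k2 = cl k1 ++ core k1 ws1 ++ m -> cr k1 = m ++ core k2 ws2 ++ cr k2 ->
  cong (fill k1 ws1) (plsubst (toStar k1) s1) (plsubst (toStar k2) s2).
Proof.
move=> wk1 wk2 S1 S2 H1 H2 El Er.
have wm : all (@wf_prim O ar _) m by move: (wf_cl wk2); rewrite El !all_cat => /and3P[].
have wcore : forall (k : ctx O X) x, wf_ctx ar k -> wf_word ar x -> all (@wf_prim O ar _) (core k x).
  by move=> k x wk wx; have [/andP[]] := wf_fill_core wk wx.
have := @disjoint s1 s2 ws1 ws2
  (fun x => toStar (setLR k2 (cl k1 ++ core k1 x ++ m) (cr k2)))
  (fun y => toStar (setLR k1 (cl k1) (m ++ core k2 y ++ cr k2))) S1 S2 H1 H2.
rewrite -Er -El !setLR_id wsubst_toStar; apply.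
- move=> x wx; apply: star_toStar; apply: wf_setLR => //; last exact: wf_cr.
  by rewrite !all_cat wf_cl // wcore.
- move=> y wy; apply: star_toStar; apply: wf_setLR => //; first exact: wf_cl.
  by rewrite !all_cat wm wf_cr // wcore.
- by move=> x y; rewrite !wsubst_toStar !fill_setLR -!catA.
Qed.

Lemma dis_arg l r d la1 (k1' : ctx O X) mid k2' ra2 s1 s2 ws1 ws2 :
  wf_ctx ar (CDeep l r d la1 k1' (mid ++ fill k2' ws2 :: ra2)) ->
  wf_ctx ar (CDeep l r d (la1 ++ fill k1' ws1 :: mid) k2' ra2) ->
  S s1 -> S s2 -> is_lead lt s1 ws1 -> is_lead lt s2 ws2 ->
  cong (fill (CDeep l r d la1 k1' (mid ++ fill k2' ws2 :: ra2)) ws1)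
    (plsubst (toStar (CDeep l r d la1 k1' (mid ++ fill k2' ws2 :: ra2))) s1)
    (plsubst (toStar (CDeep l r d (la1 ++ fill k1' ws1 :: mid) k2' ra2)) s2).
Proof.
move=> /= /and5P[wl wr ws1d wla1 /andP[wra1 wk1]] /and5P[_ _ ws2d wla2 /andP[wra2 wk2]].
move=> S1 S2 H1 H2.
have := @disjoint s1 s2 ws1 ws2
  (fun x => toStar (CDeep l r d (la1 ++ fill k1' x :: mid) k2' ra2))
  (fun y => toStar (CDeep l r d la1 k1' (mid ++ fill k2' y :: ra2))) S1 S2 H1 H2.
rewrite wsubst_toStar; apply.
- move=> x wx; apply: star_toStar => /=; rewrite wl wr wk2 wra2 /=.
  move: ws2d wla2; rewrite !size_cat /= !all_cat /= => -> /and3P[-> _ ->].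
  by have [_ ->] := wf_fill_core wk1 wx.
- move=> y wy; apply: star_toStar => /=; rewrite wl wr wk1 wla1 /=.
  move: ws1d wra1; rewrite !size_cat /= !all_cat /= => -> /and3P[-> _ ->].
  by have [_ ->] := wf_fill_core wk2 wy.
- by move=> x y; rewrite !wsubst_toStar /= -!catA.
Qed.


Lemma setLR_setLR (k : ctx O X) l r l' r' : setLR (setLR k l r) l' r' = setLR k l' r'.
Proof. by case: k. Qed.

Lemma top_le A C (k2 : ctx O X) s1 s2 ws1 ws2 :
  wf_ctx ar (CTop A C) -> wf_ctx ar k2 -> S s1 -> S s2 -> is_lead lt s1 ws1 -> is_lead lt s2 ws2 ->
  fill (CTop A C) ws1 = fill k2 ws2 -> (size A <= size (cl k2))%N ->
  cong (fill (CTop A C) ws1) (plsubst (toStar (CTop A C)) s1) (plsubst (toStar k2) s2).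
Proof.
move=> wk1 wk2 S1 S2 H1 H2 E Hle.
have w1 := lead_wf S1 H1; have w2 := lead_wf S2 H2.
have [wc2 wf2] := wf_fill_core wk2 w2.
have wA : all (@wf_prim O ar _) A by case/andP: wk1.
have wC : all (@wf_prim O ar _) C by case/andP: wk1.
have wD := wf_cl wk2; have wF := wf_cr wk2.
have E' := E; rewrite /= fill_core in E'.
have [b [Eb E1]] := cat_split E' Hle.
case: (leqP (size ws1) (size b)) => Hb.
  have [m [Em E2]] := cat_split E1 Hb.
  by apply: (dis_top (m := m) (ws2 := ws2)) => //; rewrite /= ?Eb ?Em.
have [m' [Em' E3]] := cat_split (esym E1) (ltnW Hb).
have m'0 : (0 < size m')%N by move: Hb; rewrite Em' size_cat -ltn_subLR // subnn.
case: (leqP (size (core k2 ws2)) (size m')) => Hc.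
  have [a [Ea E4]] := cat_split E3 Hc.
  have wb : all (@wf_prim O ar _) b by move: wD; rewrite Eb all_cat => /andP[].
  have wa : all (@wf_prim O ar _) a by move: wF; rewrite E4 all_cat => /andP[].
  have wkin : wf_ctx ar (setLR k2 b a) by apply: wf_setLR.
  have := inc wk1 wkin S1 S2 H1 H2 (_ : ws1 = fill (setLR k2 b a) ws2).
  rewrite /= cl_setLR cr_setLR setLR_setLR -Eb -E4 setLR_id; apply.
  by rewrite fill_setLR Em' Ea catA.
have [a [Ea E4]] := cat_split (esym E3) (ltnW Hc).
have a0 : (0 < size a)%N by move: Hc; rewrite Ea size_cat -ltn_subLR // subnn.
clear E' E1 E3 Hc.
case: k2 wk2 E Eb E4 Ea wc2 wf2 wD wF Hle => [D F|l r d la k ra] wk2 E Eb E4 Ea wc2 wf2 wD wF Hle /=; last first.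
  by move: Ea m'0 a0 => /(congr1 size); rewrite size_cat /= => E0 p1 p2; have := leq_add p1 p2; rewrite -E0.
move: Eb Ea E4 => /= Eb Ea E4.
have wa : all (@wf_prim O ar _) a by move: wC; rewrite E4 all_cat => /andP[].
case: b Eb Em' Hb => [|x b] Eb Em' Hb.
  rewrite cats0 in Eb; rewrite cat0s in Em'; subst D C ws2 ws1.
  have wkin : wf_ctx ar (CTop [::] a) by rewrite /= wa.
  have := inc wk2 wkin S2 S1 H2 H1 erefl.
  by rewrite /= cats0 -catA => /cong_sym.
subst D C ws1 ws2.
have := @inter A F s1 s2 ((x :: b) ++ m') (m' ++ a) a (x :: b) wA _ S1 S2 H1 H2.
rewrite -!catA; apply => //.
- by apply: (wf_suffix (x := m')); rewrite // /nilp -lt0n.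
- by apply: (wf_prefix (y := m')).
  rewrite !size_cat /= !addSn ltnS -!addnA ltn_add2l.
  by rewrite -[X in (X < _)%N]add0n ltn_add2r.
Qed.


Lemma top_case A C (k2 : ctx O X) s1 s2 ws1 ws2 :
  wf_ctx ar (CTop A C) -> wf_ctx ar k2 -> S s1 -> S s2 -> is_lead lt s1 ws1 -> is_lead lt s2 ws2 ->
  fill (CTop A C) ws1 = fill k2 ws2 ->
  cong (fill (CTop A C) ws1) (plsubst (toStar (CTop A C)) s1) (plsubst (toStar k2) s2).
Proof.
move=> wk1 wk2 S1 S2 H1 H2 E.
case: (leqP (size A) (size (cl k2))) => H; first exact: (top_le (ws2 := ws2)).
case: k2 wk2 E H => [D F|l r d la k ra] wk2 E H.
  have := top_le wk2 wk1 S2 S1 H2 H1 (esym E) (ltnW H).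
  by rewrite -E => /cong_sym.
have E' := E; rewrite /= in E'.
have [b [Eb E1]] := cat_split (esym E') (ltnW H).
case: b Eb E1 => [|x b] Eb E1; first by rewrite /= Eb cats0 ltnn in H.
case: E1 => Ex E1; subst x A.
have := @dis_top (CDeep l r d la k ra) (CTop (l ++ PO d (la ++ fill k ws2 :: ra) :: b) C)
  s2 s1 ws2 ws1 b wk2 wk1 S2 S1 H2 H1 erefl E1.
by rewrite -E => /cong_sym.
Qed.

Lemma main (k1 : ctx O X) : forall k2 s1 s2 ws1 ws2,
  wf_ctx ar k1 -> wf_ctx ar k2 -> S s1 -> S s2 -> is_lead lt s1 ws1 -> is_lead lt s2 ws2 ->
  fill k1 ws1 = fill k2 ws2 ->
  cong (fill k1 ws1) (plsubst (toStar k1) s1) (plsubst (toStar k2) s2).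
Proof.
elim: k1 => [A C|l1 r1 d1 la1 k1' IH ra1] k2 s1 s2 ws1 ws2 wk1 wk2 S1 S2 H1 H2 E.
  exact: (top_case (ws2 := ws2)).
case: k2 wk2 E => [D F|l2 r2 d2 la2 k2' ra2] wk2 E.
  have := top_case wk2 wk1 S2 S1 H2 H1 (esym E).
  by rewrite -E => /cong_sym.
have E' := E; rewrite /= in E'.
case: (ltngtP (size l1) (size l2)) => Hl.
- have [b [Eb E1]] := cat_split E' (ltnW Hl).
  case: b Eb E1 => [|x b] Eb E1; first by rewrite Eb cats0 ltnn in Hl.
  case: E1 => Ex E1; subst x l2.
  by apply: (dis_top (m := b) (ws2 := ws2)).
- have [b [Eb E1]] := cat_split (esym E') (ltnW Hl).
  case: b Eb E1 => [|x b] Eb E1; first by rewrite Eb cats0 ltnn in Hl.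
  case: E1 => Ex E1; subst x l1.
  have := @dis_top _ _ s2 s1 ws2 ws1 b wk2 wk1 S2 S1 H2 H1 erefl E1.
  by rewrite -E => /cong_sym.
have [m [Em E1]] := cat_split E' (eq_leq Hl).
have m0 : m = [::] by apply/nilP; move: Hl; rewrite Em size_cat -{1}[size l1]addn0 => /eqP; rewrite eqn_add2l eq_sym.
subst m; rewrite cats0 in Em; subst l2.
case: E1 => Ed Eargs Er; subst d2 r2.
case: (ltngtP (size la1) (size la2)) => Ha.
- have [b [Eb E2]] := cat_split Eargs (ltnW Ha).
  case: b Eb E2 => [|x mid] Eb E2; first by rewrite Eb cats0 ltnn in Ha.
  case: E2 => Ex E2; subst x la2 ra1.
  exact: dis_arg.
- have [b [Eb E2]] := cat_split (esym Eargs) (ltnW Ha).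
  case: b Eb E2 => [|x mid] Eb E2; first by rewrite Eb cats0 ltnn in Ha.
  case: E2 => Ex E2; subst x la1 ra2.
  have := dis_arg wk2 wk1 S2 S1 H2 H1.
  by rewrite -E => /cong_sym.
have [m [Em E2]] := cat_split Eargs (eq_leq Ha).
have m0 : m = [::] by apply/nilP; move: Ha; rewrite Em size_cat -{1}[size la1]addn0 => /eqP; rewrite eqn_add2l eq_sym.
subst m; rewrite cats0 in Em; subst la2.
case: E2 => Ef Era; subst ra2.
set kout := CDeep l1 r1 d1 la1 (CTop [::] [::]) ra1.
have Ew : fill (CDeep l1 r1 d1 la1 k1' ra1) ws1 = fill kout (fill k1' ws1) by rewrite /= cats0.
rewrite Ew.
move: wk1 wk2 => /and5P[wl wr ws wla /andP[wra wk1']] /and5P[_ _ _ _ /andP[_ wk2']].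
have IHr := IH k2' s1 s2 ws1 ws2 wk1' wk2' S1 S2 H1 H2 Ef.
have wkout : wf_ctx ar kout by rewrite /= wl wr ws wla wra.
apply: (wrap wkout _ IHr).
  by have [_ ->] := wf_fill_core wk1' (lead_wf S1 H1).
move=> g; rewrite !Ef_plsubst; congr (_ - _); apply: Ef_ext => y;
  by rewrite !wsubst_toStar /= cats0.
Qed.

End Main.

Unset Implicit Arguments.

Theorem lemma3p3 (K : comPzRingType) (X O : eqType) (ar : O -> nat)
  (Har : forall d, (0 < ar d)%N)
  (lt : oword O X -> oword O X -> Prop) (Hlt : monomial_order ar lt)
  (S : opoly O X K -> Prop)
  (HSwf : forall s, S s -> wf_poly ar s)
  (HSmon : forall s, S s -> omonic lt s)
  (HGSB : GSbasis ar lt S)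
  (u1 u2 : oword O (option X)) (s1 s2 : opoly O X K) (w ws1 ws2 : oword O X) :
  is_star_word ar u1 -> is_star_word ar u2 -> S s1 -> S s2 ->
  is_lead lt s1 ws1 -> is_lead lt s2 ws2 ->
  w = wsubst u1 ws1 -> w = wsubst u2 ws2 ->
  cong_mod ar lt S w (plsubst u1 s1) (plsubst u2 s2).
Proof.
move=> /star2ctx [k1 [wk1 ->]] /star2ctx [k2 [wk2 ->]] S1 S2 H1 H2.
rewrite !wsubst_toStar => -> E.
exact: (main Hlt HSwf HSmon HGSB wk1 wk2 S1 S2 H1 H2 E).
Qed.
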